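(* Let $\mathbb{F}$ be a field, $\sigma=\mathrm{Id}$, and $\delta$ a derivation of $\mathbb{F}$ with field of constants $K=\{\beta\in\mathbb{F}:\delta(\beta)=0\}$, and assume $\dim_K(\mathbb{F})<\infty$. A vector $(a_1,\dots,a_r)\in\mathbb{F}^r$ is a $(\sigma,\delta)$-multiplicity sequence if and only if for each $i=1,\dots,r-1$ there exists $\beta_i\in\mathbb{F}^*$ with $$a_{i+1}-a_i=\delta(\beta_i)\beta_i^{-1}\quad\text{and}\quad\beta_i\notin\delta(\mathbb{F}).$$
   Context: $\mathbb{F}[x;\mathrm{Id},\delta]$ is the differential polynomial ring with $xa=ax+\delta(a)$. For $\mathbf a=(a_1,\dots,a_r)$, $P_{\mathbf a}=(x-a_r)\cdots(x-a_1)$; $\mathbf a$ is a $(\sigma,\delta)$-multiplicity sequence if $a_1$ is the only $b\in\mathbb{F}$ such that $x-b$ divides $P_{\mathbf a}$ on the right. *)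

(* Defs.v *)
From HB Require Import structures.
From mathcomp Require Import all_boot all_order all_algebra.
Set Implicit Arguments. Unset Strict Implicit. Unset Printing Implicit Defensive.
Import GRing.Theory.
Local Open Scope ring_scope.

(* Differential polynomial ring F[x; Id, delta], xa = ax + delta(a).
   Elements are represented by {poly F}, read as sum_i p_i x^i with
   coefficients on the LEFT.  Only the multiplication differs. *)

Definition is_derivation (F : fieldType) (d : F -> F) : Prop :=
  (forall a b, d (a + b) = d a + d b) /\ (forall a b, d (a * b) = a * d b + d a * b).

(* left multiplication by x:  x * (sum q_j x^j) = sum (q_j x + d q_j) x^j *)
Definition xmul (F : fieldType) (d : F -> F) (q : {poly F}) : {poly F} :=
  'X * q + map_poly d q.

Definition skmul (F : fieldType) (d : F -> F) (p q : {poly F}) : {poly F} :=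
  \sum_(i < size p) p`_i *: iter i (xmul d) q.

(* P_a = (x - a_r) ... (x - a_1), for a = [:: a_1; ...; a_r] *)
Definition Pseq (F : fieldType) (d : F -> F) (a : seq F) : {poly F} :=
  foldl (fun P b => skmul d ('X - b%:P) P) 1 a.

Definition rdivides (F : fieldType) (d : F -> F) (P : {poly F}) (b : F) : Prop :=
  exists Q : {poly F}, P = skmul d Q ('X - b%:P).

Definition multiplicity_seq (F : fieldType) (d : F -> F) (a : seq F) : Prop :=
  forall b : F, rdivides d (Pseq d a) b <-> b = a`_0.

Definition findim_over_constants (F : fieldType) (d : F -> F) : Prop :=
  exists (n : nat) (e : 'I_n -> F),
    forall y : F, exists c : 'I_n -> F,
      (forall i, d (c i) = 0) /\ y = \sum_(i < n) c i * e i.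

(* Main.v *)
Set Warnings "-all".
From HB Require Import structures.
Require Import Defs.
From mathcomp Require Import all_boot all_order all_algebra.
From Stdlib Require Import ClassicalEpsilon Classical.
From mathcomp Require Import ring.
Set Implicit Arguments. Unset Strict Implicit. Unset Printing Implicit Defensive.
Import GRing.Theory.
Local Open Scope ring_scope.

Section Deriv.
Variables (F : fieldType) (d : F -> F) (Hd : is_derivation d).

Lemma dD a b : d (a + b) = d a + d b. Proof. exact: (proj1 Hd). Qed.
Lemma dM a b : d (a * b) = a * d b + d a * b. Proof. exact: (proj2 Hd). Qed.
Lemma d0 : d 0 = 0.
Proof. by apply: (addrI (d 0)); rewrite -dD !addr0. Qed.
Lemma d1 : d 1 = 0.
Proof. have := dM 1 1; rewrite !mul1r mulr1 => H. by apply: (addrI (d 1)); rewrite addr0 -H. Qed.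
Lemma dN a : d (- a) = - d a.
Proof. by apply: (addrI (d a)); rewrite -dD !subrr d0. Qed.
Lemma dB a b : d (a - b) = d a - d b. Proof. by rewrite dD dN. Qed.
Lemma dV a : a != 0 -> d (a^-1) = - (d a / (a * a)).
Proof.
move=> a0; have := dM a a^-1; rewrite divff // d1 => /esym /eqP.
rewrite addr_eq0 => /eqP H.
apply: (mulfI a0); rewrite H; field; exact: a0.
Qed.
Lemma dsum (I : Type) (r : seq I) (P : pred I) (f : I -> F) :
  d (\sum_(i <- r | P i) f i) = \sum_(i <- r | P i) d (f i).
Proof. exact: (big_morph d dD d0). Qed.
Lemma dMc k a : d k = 0 -> d (k * a) = k * d a.
Proof. by move=> dk; rewrite dM dk mul0r addr0. Qed.
Lemma dVc k : d k = 0 -> d (k^-1) = 0.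
Proof. by move=> dk; case: (eqVneq k 0) => [->|k0]; rewrite ?invr0 ?d0 // dV // dk mul0r oppr0. Qed.
End Deriv.

Section Poly.
Variables (F : fieldType) (d : F -> F) (Hd : is_derivation d).

Definition Dop (a c : F) := a * c + d c.
Definition opf (a : F) (P : {poly F}) (c : F) := \sum_(i < size P) P`_i * iter i (Dop a) c.

Lemma DopD a x y : Dop a (x + y) = Dop a x + Dop a y.
Proof. by rewrite /Dop (dD Hd) mulrDr; ring. Qed.
Lemma Dop0 a : Dop a 0 = 0.
Proof. by rewrite /Dop (d0 Hd) mulr0 addr0. Qed.
Lemma DopM a u v : Dop a (u * v) = u * Dop a v + d u * v.
Proof. by rewrite /Dop (dM Hd); ring. Qed.
Lemma Dop_sum a n (f : 'I_n -> F) : Dop a (\sum_i f i) = \sum_i Dop a (f i).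
Proof. exact: (big_morph (Dop a) (DopD a) (Dop0 a)). Qed.
Lemma iterDop0 a i : iter i (Dop a) 0 = 0.
Proof. by elim: i => //= i ->; rewrite Dop0. Qed.

Lemma opf_large a n (P : {poly F}) c : (size P <= n)%N ->
  opf a P c = \sum_(i < n) P`_i * iter i (Dop a) c.
Proof.
move=> Hn; rewrite /opf (big_ord_widen n (fun i => P`_i * iter i (Dop a) c)) //.
rewrite big_mkcond; apply: eq_bigr => i _; case: ifP => // /negbT.
by rewrite -leqNgt => H; rewrite nth_default // mul0r.
Qed.

Lemma opfD a P Q c : opf a (P + Q) c = opf a P c + opf a Q c.
Proof.
pose n := maxn (size P) (size Q).
rewrite !(@opf_large a n) ?leq_maxl ?leq_maxr //; last first.
  by apply: leq_trans (size_add _ _) _.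
by rewrite -big_split; apply: eq_bigr => i _; rewrite coefD mulrDl.
Qed.
Lemma opf0 a c : opf a 0 c = 0.
Proof. by rewrite /opf size_poly0 big_ord0. Qed.
Lemma opf_sum a n (f : 'I_n -> {poly F}) c :
  opf a (\sum_i f i) c = \sum_i opf a (f i) c.
Proof. exact: (big_morph (fun P => opf a P c) (fun P Q => opfD a P Q c) (opf0 a c)). Qed.
Lemma opfZ a k P c : opf a (k *: P) c = k * opf a P c.
Proof.
rewrite (@opf_large a (size P)) ?size_scale_leq // /opf mulr_sumr.
by apply: eq_bigr => i _; rewrite coefZ mulrA.
Qed.

Lemma opf_xmul a q c : opf a (xmul d q) c = Dop a (opf a q c).
Proof.
rewrite /xmul opfD.
rewrite (@opf_large a (size q).+1); last first.
  apply: leq_trans (size_mul_leq _ _) _; rewrite size_polyX.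
  by case: (size q).
rewrite big_ord_recl coefXM /= mul0r add0r.
rewrite (@opf_large a (size q)); last by rewrite /map_poly; exact: size_poly.
rewrite /opf Dop_sum -big_split /=; apply: eq_bigr => i _.
by rewrite coefXM /= coef_map_id0 ?(d0 Hd) // DopM.
Qed.

Lemma opf_iter a i q c : opf a (iter i (xmul d) q) c = iter i (Dop a) (opf a q c).
Proof. by elim: i => //= i <-; rewrite opf_xmul. Qed.

Lemma opf_skmul a P Q c : opf a (skmul d P Q) c = opf a P (opf a Q c).
Proof.
rewrite /skmul opf_sum [RHS]/opf; apply: eq_bigr => i _.
by rewrite opfZ opf_iter.
Qed.

Lemma opf1 a c : opf a 1 c = c.
Proof. by rewrite /opf size_poly1 big_ord1 coefC /= mul1r. Qed.
Lemma opfC a r c : opf a r%:P c = r * c.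
Proof.
by rewrite (@opf_large a 1) ?size_polyC_leq1 // big_ord1 coefC.
Qed.
Lemma opf_XsubC a e c : opf a ('X - e%:P) c = Dop a c - e * c.
Proof.
rewrite (@opf_large a 2) ?size_XsubC // !big_ord_recl big_ord0 /=.
rewrite !coefB !coefX !coefC /=; ring.
Qed.

Definition Tf a (s : seq F) c := foldl (fun c e => Dop a c - e * c) c s.

Lemma opf_Pseq a s c : opf a (Pseq d s) c = Tf a s c.
Proof.
rewrite /Pseq /Tf; rewrite -[in RHS](opf1 a c).
elim: s (1 : {poly F}) => //= e s IH P.
by rewrite IH opf_skmul opf_XsubC.
Qed.

Lemma skmul_large n (P Q : {poly F}) : (size P <= n)%N ->
  skmul d P Q = \sum_(i < n) P`_i *: iter i (xmul d) Q.
Proof.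
move=> Hn; rewrite /skmul (big_ord_widen n (fun i => P`_i *: iter i (xmul d) Q)) //.
rewrite big_mkcond; apply: eq_bigr => i _; case: ifP => // /negbT.
by rewrite -leqNgt => H; rewrite nth_default // scale0r.
Qed.
Lemma skmulD P1 P2 Q : skmul d (P1 + P2) Q = skmul d P1 Q + skmul d P2 Q.
Proof.
pose n := maxn (size P1) (size P2).
rewrite !(@skmul_large n) ?leq_maxl ?leq_maxr //; last first.
  by apply: leq_trans (size_add _ _) _.
by rewrite -big_split; apply: eq_bigr => i _; rewrite coefD scalerDl.
Qed.
Lemma skmul_mono k c Q : skmul d (c *: 'X^k) Q = c *: iter k (xmul d) Q.
Proof.
rewrite (@skmul_large k.+1); last by apply: leq_trans (size_scale_leq _ _) _; rewrite size_polyXn.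
rewrite big_ord_recr /= big1 ?add0r; first by rewrite coefZ coefXn eqxx mulr1.
by move=> i _; rewrite coefZ coefXn /= (ltn_eqF (ltn_ord i)) mulr0 scale0r.
Qed.
Lemma skmul0 Q : skmul d 0 Q = 0.
Proof. by rewrite /skmul size_poly0 big_ord0. Qed.

Lemma iter_xmul_size (b : F) k :
  (size (iter k (xmul d) ('X - b%:P)%R) <= k.+2)%N /\
  (iter k (xmul d) ('X - b%:P))`_k.+1 = 1.
Proof.
elim: k => [|k [IHs IHc]] /=.
  by rewrite size_XsubC coefB coefX coefC /= subr0.
set q := iter k (xmul d) ('X - b%:P) in IHs IHc *.
have sm : (size (map_poly d q) <= k.+2)%N.
  by apply: leq_trans IHs; rewrite /map_poly; exact: size_poly.
split.
  apply: leq_trans (size_add _ _) _; rewrite geq_max; apply/andP; split.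
    by apply: leq_trans (size_mul_leq _ _) _; rewrite size_polyX.
  by apply: leq_trans sm _.
rewrite coefD coefXM /= IHc coef_map_id0 ?(d0 Hd) //.
by rewrite (leq_sizeP _ _ IHs) // (d0 Hd) addr0.
Qed.

Lemma skdiv b P : exists Q r, P = skmul d Q ('X - b%:P) + r%:P.
Proof.
move: {2}(size P) (leqnn (size P)) => n; elim: n P => [|n IH] P Hs.
  exists 0, 0; rewrite skmul0 add0r; apply/eqP; rewrite -size_poly_eq0.
  by rewrite -leqn0.
case: n IH Hs => [|n] IH Hs.
  by exists 0, P`_0; rewrite skmul0 add0r [LHS]size1_polyC.
case: (iter_xmul_size b n) => Ss Sc.
set R := iter n (xmul d) ('X - b%:P) in Ss Sc.
have : (size (P - P`_n.+1 *: R)%R <= n.+1)%N.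
  apply/leq_sizeP => j Hj; rewrite coefB coefZ.
  case: (ltngtP j n.+1) => [|Hj2|->]; first by rewrite ltnNge Hj.
    by rewrite (leq_sizeP _ _ Hs j Hj2) (leq_sizeP _ _ Ss j Hj2) mulr0 subr0.
  by rewrite Sc mulr1 subrr.
case/IH => Q [r Hr]; exists (Q + P`_n.+1 *: 'X^n), r.
by rewrite skmulD skmul_mono -/R -addrA (addrC (_ *: R)) addrA -Hr subrK.
Qed.

Lemma rdivE P b : rdivides d P b <-> opf b P 1 = 0.
Proof.
split.
  case=> Q ->; rewrite opf_skmul opf_XsubC /Dop (d1 Hd) addr0 mulr1 subrr.
  rewrite /opf big1 // => i _; by rewrite iterDop0 mulr0.
move=> H; case: (skdiv b P) => Q [r HP].
move: H; rewrite HP opfD opfC mulr1 opf_skmul opf_XsubC /Dop (d1 Hd) addr0 mulr1 subrr.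
rewrite /opf big1 ?add0r => [Hr|i _]; last by rewrite iterDop0 mulr0.
by exists Q; rewrite Hr addr0.
Qed.

End Poly.
Section Const.
Variables (F : fieldType) (d : F -> F) (Hd : is_derivation d).

Definition constb : pred F := fun x => let _ := Hd in d x == 0.

Lemma constbE x : (x \in constb) = (d x == 0). Proof. by []. Qed.

Lemma const_divring : divring_closed constb.
Proof.
split; first by rewrite constbE (d1 Hd).
  by move=> x y; rewrite !constbE (dB Hd) => /eqP -> /eqP ->; rewrite subrr.
move=> x y; rewrite !constbE => /eqP dx /eqP dy.
by rewrite (dM Hd) (dVc Hd dy) dx mulr0 mul0r addr0.
Qed.

HB.instance Definition _ := GRing.isDivringClosed.Build F constb const_divring.

Record Kt := MkK { kval :> F; kvalP : kval \in constb }.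
HB.instance Definition _ := [isSub for kval].
HB.instance Definition _ := [Choice of Kt by <:].
HB.instance Definition _ := [SubChoice_isSubIntegralDomain of Kt by <:].
HB.instance Definition _ := [SubIntegralDomain_isSubField of Kt by <:].

Lemma dkval (k : Kt) : d (kval k) = 0.
Proof. by apply/eqP; exact: (kvalP k). Qed.

Lemma kval_mul (a b : Kt) : kval (a * b) = kval a * kval b. Proof. by []. Qed.

Variable Hfin : findim_over_constants d.

Definition FK : Type := let _ := Hfin in F.
HB.instance Definition _ := GRing.Zmodule.on FK.
Definition scK (k : Kt) (x : FK) : FK := (kval k : F) * x.
Lemma scKA a b v : scK a (scK b v) = scK (a * b) v. Proof. by rewrite /scK mulrA. Qed.
Lemma scK1 : left_id 1 scK. Proof. by move=> x; rewrite /scK mul1r. Qed.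
Lemma scKDr : right_distributive scK +%R. Proof. by move=> ???; rewrite /scK mulrDr. Qed.
Lemma scKDl v : {morph scK^~ v : a b / a + b}. Proof. by move=> ??; rewrite /scK /= mulrDl. Qed.
HB.instance Definition _ := GRing.Zmodule_isLmodule.Build Kt FK scKA scK1 scKDr scKDl.

Lemma scKE (a : Kt) (x : FK) : a *: x = (kval a : F) * (x : F). Proof. by []. Qed.

Definition freeK m (e : 'I_m -> F) := forall c : 'I_m -> F, (forall i, d (c i) = 0) ->
  \sum_i c i * e i = 0 -> forall i, c i = 0.
Definition spanK m (e : 'I_m -> F) := forall y : F, exists c : 'I_m -> F,
  (forall i, d (c i) = 0) /\ y = \sum_i c i * e i.

Lemma basis_ex : exists m (e : 'I_m -> F), freeK e /\ spanK e.
Proof.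
case: Hfin => n [e Hs]; elim: n e Hs => [|n IH] e Hs.
  by exists 0%N, e; split => // c _ _ [].
case: (classic (freeK e)) => Hf; first by exists n.+1, e.
have [c [Hc [Hsum Hj]]] : exists c : 'I_n.+1 -> F, (forall i, d (c i) = 0) /\
   \sum_i c i * e i = 0 /\ exists j, c j != 0.
  apply: NNPP => H; apply: Hf => c Hc Hs0 i; apply: NNPP => Hi.
  by apply: H; exists c; split => //; split => //; exists i; apply/eqP.
case: Hj => j cj0.
apply: (IH (fun i => e (lift j i))) => y.
case: (Hs y) => c' [Hc' ->].
exists (fun i => c' (lift j i) - c' j / c j * c (lift j i)); split.
  move=> i; rewrite (dB Hd) (dM Hd) (dM Hd) (dVc Hd (Hc j)) !Hc !Hc' ?(mulr0, mul0r, addr0).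
  by rewrite ?subrr ?subr0.
have ej : e j = - (c j)^-1 * \sum_(i < n) c (lift j i) * e (lift j i).
  move: Hsum; rewrite (bigD1_ord j) //= => /eqP; rewrite addr_eq0 => /eqP H.
  by apply: (mulfI cj0); rewrite H mulNr mulrN mulrA divff // mul1r.
rewrite (bigD1_ord j) //= ej.
rewrite mulrA mulr_sumr addrC -big_split /=; apply: eq_bigr => i _.
by ring.
Qed.


Let bex := constructive_indefinite_description _ basis_ex.
Definition mK : nat := sval bex.
Let eex := constructive_indefinite_description _ (svalP bex).
Definition eK : 'I_mK -> F := sval eex.
Lemma eK_free : freeK eK. Proof. exact: (proj1 (svalP eex)). Qed.
Lemma eK_span : spanK eK. Proof. exact: (proj2 (svalP eex)). Qed.

Definition r2v (r : 'rV[Kt]_mK) : FK := \sum_i kval (r 0 i) * eK i.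

Lemma r2v_lin : linear r2v.
Proof.
move=> a r s; rewrite /r2v scKE mulr_sumr -big_split /=; apply: eq_bigr => i _.
by rewrite !mxE /= mulrDl mulrA.
Qed.

Lemma r2v_inj : injective r2v.
Proof.
move=> r s H; apply/rowP => i.
have := @eK_free (fun i => kval (r 0 i) - kval (s 0 i)).
move=> /(_ _ _ i) H2; apply: val_inj; apply/eqP; rewrite -subr_eq0; apply/eqP; apply: H2.
  by move=> j; rewrite (dB Hd) !dkval subrr.
by rewrite /r2v in H; under eq_bigr do rewrite mulrBl; rewrite sumrB H subrr.
Qed.

Lemma r2v_surj y : exists r, r2v r = y.
Proof.
case: (eK_span y) => c [Hc ->].
have Pc i : c i \in constb by rewrite constbE Hc.
by exists (\row_i MkK (Pc i)); apply: eq_bigr => i _; rewrite mxE.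
Qed.

Definition v2r (y : FK) : 'rV[Kt]_mK := sval (constructive_indefinite_description _ (r2v_surj y)).
Lemma v2rK : cancel v2r r2v.
Proof. by move=> y; rewrite /v2r; case: constructive_indefinite_description. Qed.
Lemma r2vK : cancel r2v v2r.
Proof. by move=> r; apply: r2v_inj; rewrite v2rK. Qed.

Lemma v2r_lin : linear v2r.
Proof. by move=> a x y; apply: r2v_inj; rewrite r2v_lin !v2rK. Qed.

Definition vaxK : Vector.axiom mK FK := exist2 _ _ v2r v2r_lin (Bijective v2rK r2vK).
HB.instance Definition _ := Lmodule_hasFinDim.Build Kt FK vaxK.

Lemma lin_of (f : F -> F) : (forall x y, f (x + y) = f x + f y) ->
  (forall k x, d k = 0 -> f (k * x) = k * f x) -> linear (f : FK -> FK).
Proof. by move=> Ha Hs a x y; rewrite Ha /= /scK Hs // dkval. Qed.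

Lemma inj_surjK (f : F -> F) : (forall x y, f (x + y) = f x + f y) ->
  (forall k x, d k = 0 -> f (k * x) = k * f x) -> injective f ->
  forall y, exists x, f x = y.
Proof.
move=> Ha Hs Hi y.
pose fL : {linear FK -> FK} := HB.pack (f : FK -> FK)
  (GRing.isLinear.Build Kt FK FK *:%R (f : FK -> FK) (lin_of Ha Hs)).
pose g := linfun fL.
have gE : forall x, g x = f x by move=> x; rewrite lfunE.
have k0 : lker g == 0%VS by apply/lker0P => u v; rewrite !gE; apply: Hi.
have : (y : FK) \in limg g by rewrite lker0_limgf // memvf.
by case/memv_imgP => u _ ->; exists u; rewrite gE.
Qed.

Lemma im_eqK (L : F -> F) : (forall x y, L (x + y) = L x + L y) ->
  (forall k x, d k = 0 -> L (k * x) = k * L x) ->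
  (forall c, L c = 0 <-> d c = 0) -> (forall c, exists y, L c = d y) ->
  forall y, exists c, L c = d y.
Proof.
move=> Ha Hs Hk Hi y.
pose fL : {linear FK -> FK} := HB.pack (L : FK -> FK)
  (GRing.isLinear.Build Kt FK FK *:%R (L : FK -> FK) (lin_of Ha Hs)).
have dlin : linear (d : FK -> FK).
  apply: lin_of; first exact: dD.
  by move=> k x dk; rewrite (dMc Hd) .
pose dL : {linear FK -> FK} := HB.pack (d : FK -> FK)
  (GRing.isLinear.Build Kt FK FK *:%R (d : FK -> FK) dlin).
pose g := linfun fL.
pose h := linfun dL.
have gE : forall x, g x = L x by move=> x; rewrite lfunE.
have hE : forall x, h x = d x by move=> x; rewrite lfunE.
have kk : lker g = lker h.
  apply/vspaceP => v; rewrite !memv_ker gE hE.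
  by apply/eqP/eqP => /Hk.
have sub : (limg g <= limg h)%VS.
  apply/subvP => v /memv_imgP [u _ ->]; rewrite gE.
  case: (Hi u) => z ->; rewrite -hE; exact: memv_img (memvf _).
have dimE : \dim (limg g) = \dim (limg h).
  have := limg_ker_dim g fullv; have := limg_ker_dim h fullv.
  by rewrite kk => <- /eqP; rewrite eqn_add2l => /eqP.
have eqI : limg g = limg h by apply/eqP; rewrite eqEdim sub dimE leqnn.
have : (d y : FK) \in limg g by rewrite eqI -hE memv_img // memvf.
by case/memv_imgP => u _ Hu; exists u; rewrite -gE.
Qed.

End Const.

Ltac fs := field; rewrite ?oner_neq0 ?andbT ?andTb; try done; repeat (apply/andP; split); try done.

Section Main.
Variables (F : fieldType) (d : F -> F) (Hd : is_derivation d).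

Definition Ef a e c := Dop d a c - e * c.

Lemma Tf_cons a e s c : Tf d a (e :: s) c = Tf d a s (Ef a e c).
Proof. by []. Qed.
Lemma Tf_rcons a s e c : Tf d a (rcons s e) c = Ef a e (Tf d a s c).
Proof. by rewrite /Tf foldl_rcons. Qed.

Lemma Tf0 a s : Tf d a s 0 = 0.
Proof.
elim: s => // e s IH; rewrite Tf_cons.
by rewrite /Ef Dop0 // mulr0 subr0.
Qed.

Lemma Tf_add a s x y : Tf d a s (x + y) = Tf d a s x + Tf d a s y.
Proof.
elim: s x y => // e s IH x y; rewrite !Tf_cons -IH; congr (Tf d a s _).
by rewrite /Ef DopD //; ring.
Qed.

Lemma Tf_hom a s k x : d k = 0 -> Tf d a s (k * x) = k * Tf d a s x.
Proof.
move=> dk; elim: s x => // e s IH x; rewrite !Tf_cons -IH; congr (Tf d a s _).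
by rewrite /Ef DopM // dk mul0r addr0; ring.
Qed.

Lemma Tf_conj a s c u : c != 0 -> Tf d a s (c * u) = c * Tf d (a + d c / c) s u.
Proof.
move=> c0; elim: s u => // e s IH u; rewrite !Tf_cons -IH; congr (Tf d a s _).
rewrite /Ef /Dop (dM Hd); fs.
Qed.

Definition cj (x y : F) := exists u, u != 0 /\ y = x + d u / u.

Lemma cj_refl x : cj x x.
Proof. by exists 1; rewrite oner_eq0 (d1 Hd) mul0r addr0. Qed.
Lemma cj_sym x y : cj x y -> cj y x.
Proof.
case=> u [u0 ->]; exists u^-1; rewrite invr_eq0 u0; split => //.
rewrite (dV Hd u0); fs.
Qed.
Lemma cj_trans x y z : cj x y -> cj y z -> cj x z.
Proof.
case=> u [u0 ->] [v [v0 ->]]; exists (u * v); rewrite mulf_neq0 //; split => //.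
rewrite (dM Hd); fs.
Qed.

Lemma Ef_inj a e c : ~ cj a e -> Ef a e c = 0 -> c = 0.
Proof.
move=> Hn H; case: (eqVneq c 0) => // c0; exfalso; apply: Hn; exists c; split => //.
move: H; rewrite /Ef /Dop => /eqP; rewrite subr_eq0 => /eqP H.
apply: (mulIf c0); rewrite -H; fs.
Qed.

Lemma Tf_inj0 a s c : (forall x, x \in s -> ~ cj a x) -> Tf d a s c = 0 -> c = 0.
Proof.
elim: s c => // e s IH c Hn; rewrite Tf_cons => H.
have Hs : forall x, x \in s -> ~ cj a x by move=> x Hx; apply: Hn; rewrite inE Hx orbT.
apply: (@Ef_inj a e); first by apply: Hn; rewrite inE eqxx.
exact: IH Hs H.
Qed.

Lemma Tf_head s c : (0 < size s)%N -> d c = 0 -> Tf d s`_0 s c = 0.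
Proof.
case: s => // a s _ dc; rewrite Tf_cons /=.
by rewrite /Ef /Dop dc addr0 mulrC subrr Tf0.
Qed.

Definition Lcond (t : F) := exists beta : F, beta != 0 /\
  t = d beta * beta^-1 /\ ~ (exists y : F, d y = beta).

Definition good (a : seq F) := forall i : nat, (i.+1 < size a)%N ->
  exists beta : F, beta != 0 /\ a`_i.+1 - a`_i = d beta * beta^-1 /\
  ~ (exists y : F, d y = beta).

Definition multT (a : seq F) := forall b, Tf d b a 1 = 0 <-> b = a`_0.

Lemma good_rcons s e : (0 < size s)%N ->
  good (rcons s e) <-> good s /\ Lcond (e - s`_(size s).-1).
Proof.
move=> sp; split.
  move=> H; split.
    move=> i Hi; have Hi' : (i.+1 < size (rcons s e))%N by rewrite size_rcons ltnS ltnW.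
    have Hi2 : (i < size s)%N := ltn_trans (ltnSn i) Hi.
    case: (H i Hi') => beta Hb; exists beta.
    by move: Hb; rewrite !nth_rcons Hi Hi2.
  have Hi : ((size s).-1.+1 < size (rcons s e))%N by rewrite size_rcons prednK.
  case: (H _ Hi) => beta Hb; exists beta.
  by move: Hb; rewrite !nth_rcons prednK // ltnn eqxx leqnn.
case=> Hg Hl i; rewrite size_rcons ltnS leq_eqVlt => /orP [/eqP Hi|Hi].
  move: Hl; rewrite -Hi /= => Hl.
  by rewrite !nth_rcons Hi ltnn eqxx -Hi ltnSn.
have Hi2 : (i < size s)%N := ltn_trans (ltnSn i) Hi.
by rewrite !nth_rcons Hi Hi2; apply: Hg.
Qed.

Lemma vdiv v w : v != 0 -> v * d (w / v) = d w - w * d v / v.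
Proof.
move=> v0; have := dM Hd v (w / v).
rewrite mulrCA divff // mulr1 => ->; fs.
Qed.

Lemma inv_good s : good s -> (0 < size s)%N ->
  exists u, u != 0 /\ s`_(size s).-1 = s`_0 + d u / u /\
   (forall c, exists y, Tf d s`_0 s c = u * d y) /\
   (forall c, Tf d s`_0 s c = 0 -> d c = 0) /\
   (forall x, x \in s -> cj s`_0 x).
Proof.
elim/last_ind: s => // s e IH Hg _.
case: (posnP (size s)) => [/size0nil ->|sp].
  exists 1; rewrite oner_eq0 /= (d1 Hd) mul0r addr0; split => //; split => //.
  split; first by move=> c; exists c; rewrite /Tf /= /Ef /Dop mul1r; ring.
  split; first by rewrite /Tf /= /Ef /Dop => c /eqP; rewrite addrAC subrr add0r => /eqP.
  by move=> x; rewrite inE => /eqP ->; apply: cj_refl.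
case/(good_rcons e sp): Hg => Hg [beta [b0 [Hb Hnd]]].
case: (IH Hg sp) => u [u0 [Hl [Him [Hker Hmem]]]].
have h0 : (rcons s e)`_0 = s`_0 by rewrite nth_rcons sp.
rewrite h0 size_rcons /= nth_rcons ltnn eqxx.
have eE : e = s`_0 + d (u * beta) / (u * beta).
  rewrite -(subrK s`_(size s).-1 e) Hb Hl (dM Hd); fs.
have ub0 : u * beta != 0 by rewrite mulf_neq0.
have TfE c : Tf d s`_0 (rcons s e) c = (u * beta) * d (Tf d s`_0 s c / (u * beta)).
  by rewrite Tf_rcons vdiv // /Ef /Dop eE; fs.
exists (u * beta); split => //; split => //; split.
  by move=> c; exists (Tf d s`_0 s c / (u * beta)); rewrite TfE.
split.
  move=> c; rewrite TfE => /eqP; rewrite mulf_eq0 (negbTE ub0) /= => /eqP Hk.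
  apply: Hker; case: (Him c) => y Hy.
  set k := Tf d s`_0 s c / (u * beta) in Hk.
  have wE : Tf d s`_0 s c = k * (u * beta) by rewrite /k divfK.
  case: (eqVneq k 0) => [k0|k0]; first by rewrite wE k0 mul0r.
  exfalso; apply: Hnd; exists (k^-1 * y).
  rewrite (dMc Hd) ?(dVc Hd) //; apply: (mulfI u0); apply: (mulfI k0).
  have H : u * d y = k * (u * beta) by rewrite -Hy wE.
  rewrite -H; fs.
move=> x; rewrite mem_rcons inE => /orP [/eqP ->|/Hmem //].
by exists (u * beta); split.
Qed.


Lemma good_mult s : good s -> (0 < size s)%N -> multT s.
Proof.
move=> Hg sp b; split; last by move=> ->; apply: Tf_head; rewrite ?(d1 Hd).
move=> Hb; case: (inv_good Hg sp) => u [u0 [_ [_ [Hker Hmem]]]].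
case: (classic (cj s`_0 b)) => [[c [c0 bE]]|Hn].
  have := Tf_conj s`_0 s 1 c0; rewrite mulr1 -bE Hb mulr0 => /Hker dc.
  by rewrite bE dc mul0r addr0.
exfalso; have : (1:F) = 0.
  apply: (@Tf_inj0 b s) => // x Hx Hc; apply: Hn.
  exact: cj_trans (Hmem x Hx) (cj_sym Hc).
by move/eqP; rewrite oner_eq0.
Qed.

Lemma dNone : d (-1) = 0.
Proof. by rewrite (dN Hd) (d1 Hd) oppr0. Qed.

Variable Hfin : findim_over_constants d.

Lemma mult_good s : multT s -> (0 < size s)%N -> good s.
Proof.
elim/last_ind: s => // s e IH Hm _.
case: (posnP (size s)) => [/size0nil ->|sp]; first by move=> i.
have h0 : (rcons s e)`_0 = s`_0 by rewrite nth_rcons sp.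
have Hroot : forall b, Tf d b (rcons s e) 1 = 0 -> b = s`_0.
  by move=> b /(Hm b).1; rewrite h0.
have Hms : multT s.
  move=> b; split; last by move=> ->; apply: Tf_head; rewrite ?(d1 Hd).
  by move=> Hb; apply: Hroot; rewrite Tf_rcons Hb /Ef Dop0 // mulr0 subr0.
have Hg := IH Hms sp.
apply/(good_rcons e sp); split => //.
case: (inv_good Hg sp) => u [u0 [Hl [Him [Hker Hmem]]]].
have cjl : cj s`_0 s`_(size s).-1 by exists u.
have Hc : cj s`_(size s).-1 e.
  apply: NNPP => Hn.
  have Hn2 : forall x, x \in s -> ~ cj e x.
    move=> x Hx Hex; apply: Hn.
    exact: cj_trans (cj_sym cjl) (cj_trans (Hmem x Hx) (cj_sym Hex)).
  have inj : injective (Tf d e s).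
    move=> x y Hxy; apply/eqP; rewrite -subr_eq0; apply/eqP; apply: (Tf_inj0 Hn2).
    by rewrite Tf_add -mulN1r Tf_hom ?dNone // mulN1r Hxy subrr.
  case: (inj_surjK Hd Hfin (f := Tf d e s) _ _ inj 1) => [x y|k x dk|c Hc1].
  - exact: Tf_add.
  - exact: Tf_hom.
  case: (eqVneq c 0) => [c0|c0].
    by move: Hc1; rewrite c0 Tf0 => /eqP; rewrite eq_sym oner_eq0.
  have := Tf_conj e (rcons s e) 1 c0.
  rewrite mulr1 Tf_rcons Hc1 /Ef /Dop (d1 Hd) mulr1 addr0 subrr => /esym /eqP.
  rewrite mulf_eq0 (negbTE c0) /= => /eqP /Hroot bE.
  apply: Hn; apply: cj_trans (cj_sym cjl) (cj_sym _).
  by exists c; split => //; rewrite bE.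
case: Hc => beta [b0 eE].
exists beta; split => //; split; first by rewrite eE addrAC subrr add0r.
move=> [y dy].
pose L c := u^-1 * Tf d s`_0 s c.
case: (im_eqK Hd Hfin (L := L) _ _ _ _ y) => [x z|k x dk|c|c|c Hc].
- by rewrite /L Tf_add mulrDr.
- by rewrite /L Tf_hom // mulrCA.
- split; last by move=> dc; rewrite /L Tf_head // mulr0.
  rewrite /L => /eqP; rewrite mulf_eq0 invr_eq0 (negbTE u0) /= => /eqP; exact: Hker.
- by case: (Him c) => z Hz; exists z; rewrite /L Hz mulKf.
have Hw : Tf d s`_0 s c = u * beta by rewrite -dy -Hc /L mulVKf.
have T0 : Tf d s`_0 (rcons s e) c = 0.
  rewrite Tf_rcons Hw /Ef /Dop eE Hl (dM Hd); fs.
case: (eqVneq (d c) 0) => [dc|dc0].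
  by move: Hw; rewrite Tf_head // => /eqP; rewrite eq_sym mulf_eq0 (negbTE u0) (negbTE b0).
have c0 : c != 0 by apply: contraNneq dc0 => ->; rewrite (d0 Hd).
have := Tf_conj s`_0 (rcons s e) 1 c0; rewrite mulr1 T0 => /esym /eqP.
rewrite mulf_eq0 (negbTE c0) /= => /eqP /Hroot /eqP; rewrite -subr_eq0 addrAC subrr add0r.
by rewrite mulf_eq0 invr_eq0 (negbTE c0) orbF (negbTE dc0).
Qed.

End Main.

Theorem mainTheorem20 (F : fieldType) (d : F -> F) :
  is_derivation d -> findim_over_constants d ->
  forall a : seq F, (0 < size a)%N ->
    (multiplicity_seq d a <->
     (forall i : nat, (i.+1 < size a)%N ->
        exists beta : F, beta != 0 /\
          a`_i.+1 - a`_i = d beta * beta^-1 /\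
          ~ (exists y : F, d y = beta))).
Proof.
move=> Hd Hfin a sp.
have E : multiplicity_seq d a <-> multT d a.
  have R b : rdivides d (Pseq d a) b <-> Tf d b a 1 = 0.
    by rewrite (rdivE Hd) opf_Pseq.
  split=> H b.
    by split=> [/(R b).2 /(H b).1 | /(H b).2 /(R b).1].
  by split=> [/(R b).1 /(H b).1 | /(H b).2 /(R b).2].
rewrite E; split; first by move=> H; exact: (mult_good Hd Hfin H sp).
move=> H; exact: (good_mult Hd H sp).
Qed.
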